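(* Let $\mathbf{F}=F(\mathcal{R}[t,t^{-1}])$, let $k>1$ and $d=2^{k-2}$. If $g\in\mathbf{F}^{(k)}$, the $k$-th derived subgroup of $\mathbf{F}$, then $g=I+\sum_{i\ge d}(t-1)^iA_i$ with $A_i\in M_2(\mathcal{R})$, and all entries of $A_i$ lie in $\Sigma^{2d}$ for every $i\ge d$.
   Context: $\mathcal{R}=\mathbb{Z}[x,x^{-1},y,y^{-1}]$; $\Sigma$ is the augmentation ideal of $\mathcal{R}$ (kernel of $x,y\mapsto1$ to $\mathbb{Z}$). $F(\mathcal{R}[t,t^{-1}])$ is the subgroup of $GL_2(\mathcal{R}[t,t^{-1}])$ generated by $M_1=\begin{pmatrix}1&1-y\\0&x\end{pmatrix}$ and $M_2T=\begin{pmatrix}yt&0\\1-xt&1\end{pmatrix}$. Via $t=1+s$, $t^{-1}=\sum_{i\ge0}(-s)^i$, $\mathcal{R}[t,t^{-1}]$ embeds in $\mathcal{R}[[s]]$, giving each matrix over $\mathcal{R}[t,t^{-1}]$ a unique expansion $\sum_{i\ge0}(t-1)^iA_i$ with $A_i$ matrices over $\mathcal{R}$. Derived series: $\mathbf{F}^{(1)}=\mathbf{F}'$, $\mathbf{F}^{(k+1)}=[\mathbf{F}^{(k)},\mathbf{F}^{(k)}]$. *)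

(* Defs.v *)
From HB Require Import structures.
From mathcomp Require Import all_boot all_order all_algebra.
From mathcomp Require Import mpoly.
Set Implicit Arguments. Unset Strict Implicit. Unset Printing Implicit Defensive.
Import Order.TTheory GRing.Theory Num.Theory.
Local Open Scope ring_scope.

Definition Zxy := {mpoly int[2]}.
Definition Kxy : fieldType := {fraction Zxy}.
Definition xR : Kxy := tofrac ('X_0 : Zxy).
Definition yR : Kxy := tofrac ('X_1 : Zxy).

(* a lies in R = Z[x^{±1}, y^{±1}] *)
Definition inR (a : Kxy) : Prop :=
  exists (p : Zxy) (n : nat), a = tofrac p / (xR * yR) ^+ n.

(* a lies in the augmentation ideal Sigma (kernel of x,y |-> 1, R -> Z) *)
Definition inSigma (a : Kxy) : Prop :=
  exists (p : Zxy) (n : nat),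
    a = tofrac p / (xR * yR) ^+ n /\ p.@[fun _ => (1 : int)] = 0.

Fixpoint inSigmaPow (m : nat) (a : Kxy) : Prop :=
  match m with
  | 0 => inR a
  | m'.+1 => exists s : seq (Kxy * Kxy),
      (forall bc, bc \in s -> inSigma bc.1 /\ inSigmaPow m' bc.2) /\
      a = \sum_(bc <- s) bc.1 * bc.2
  end.

Definition Fld : fieldType := {fraction {poly Kxy}}.
Definition tF : Fld := tofrac ('X : {poly Kxy}).
Definition cF (a : Kxy) : Fld := tofrac (a%:P).

Definition ps := nat -> Kxy.
Definition ps_mul (f g : ps) : ps := fun n => \sum_(i < n.+1) f i * g (n - i)%N.
Definition ps_one : ps := fun n => if n == 0%N then 1 else 0.
Definition ps_pow (f : ps) (n : nat) : ps := iter n (ps_mul f) ps_one.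
Definition ps_of_poly (p : {poly Kxy}) : ps := fun n => p`_n.
(* image of t^{-1} = sum_i (-s)^i *)
Definition ps_tinv : ps := fun n => (-1) ^+ n.

(* The embedding R[t,t^-1] -> R[[s]], t = 1+s, t^-1 = sum_i (-s)^i:
   a is the s-expansion of f, where f = p(t) t^{-n} with p in R[t]. *)
Definition s_expansion (f : Fld) (a : ps) : Prop :=
  exists (p : {poly Kxy}) (n : nat),
    (forall i, inR p`_i) /\ f = tofrac p / tF ^+ n /\
    a = ps_mul (ps_of_poly (p \Po ('X + 1))) (ps_pow ps_tinv n).

Definition Mat := 'M[Fld]_2.

Definition M1 : Mat := \matrix_(i < 2, j < 2)
  (if i == 0 :> nat then (if j == 0 :> nat then 1 else cF (1 - yR))
   else (if j == 0 :> nat then 0 else cF xR)).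
Definition M2T : Mat := \matrix_(i < 2, j < 2)
  (if i == 0 :> nat then (if j == 0 :> nat then cF yR * tF else 0)
   else (if j == 0 :> nat then 1 - cF xR * tF else 1)).

Inductive gen (S : Mat -> Prop) : Mat -> Prop :=
| gen1 : gen S 1
| genM a b : S a -> gen S b -> gen S (a * b)
| genV a b : S a -> gen S b -> gen S (a^-1 * b).

Definition Fgroup : Mat -> Prop := gen (fun a => a = M1 \/ a = M2T).

Definition commutator_subgroup (H : Mat -> Prop) : Mat -> Prop :=
  gen (fun c => exists a b, H a /\ H b /\ c = a^-1 * b^-1 * a * b).

Fixpoint derived (k : nat) : Mat -> Prop :=
  match k with
  | 0 => Fgroup
  | k'.+1 => commutator_subgroup (derived k')
  end.

(* Main.v *)
Require Import Defs.
From HB Require Import structures.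
From mathcomp Require Import all_boot all_order all_algebra.
From mathcomp Require Import mpoly.
From mathcomp Require Import ring.
From Stdlib Require Import FunctionalExtensionality.
Set Implicit Arguments. Unset Strict Implicit. Unset Printing Implicit Defensive.
Import GRing.Theory.
Local Open Scope ring_scope.
Section Generic.
Variable R : comRingType.
Implicit Types (g h a b c M C : 'M[R]_2).
Definition o0 : 'I_2 := @Ordinal 2 0 isT.
Definition o1 : 'I_2 := @Ordinal 2 1 isT.
Lemma ord2P (P : 'I_2 -> Prop) : P o0 -> P o1 -> forall i, P i.
Proof. by move=> h0 h1 [[|[|k]] hk] //; [have -> : hk = isT by apply: bool_irrelevance|have -> : hk = isT by apply: bool_irrelevance]. Qed.
Lemma mulE (M N : 'M[R]_2) i j : (M * N) i j = M i o0 * N o0 j + M i o1 * N o1 j.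
Proof. rewrite -mulmxE mxE big_ord_recl big_ord1.
have e0 : ord0 = o0 by apply: val_inj. have e1 : lift ord0 ord0 = o1 by apply: val_inj. by rewrite e1 e0. Qed.
Lemma addE (M N : 'M[R]_2) i j : (M + N) i j = M i j + N i j.
Proof. by rewrite mxE. Qed.
Lemma oppE (M : 'M[R]_2) i j : (- M) i j = - M i j.
Proof. by rewrite mxE. Qed.
Lemma subE (M N : 'M[R]_2) i j : (M - N) i j = M i j - N i j.
Proof. by rewrite !mxE. Qed.
Lemma oneE i j : (1 : 'M[R]_2) i j = (i == j)%:R.
Proof. by rewrite -idmxE mxE. Qed.
Lemma zeroE i j : (0 : 'M[R]_2) i j = 0.
Proof. by rewrite mxE. Qed.
Lemma scaleE (k : R) (M : 'M[R]_2) i j : (k *: M) i j = k * M i j.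
Proof. by rewrite mxE. Qed.
Lemma mxeq4 (A B : 'M[R]_2) : A o0 o0 = B o0 o0 -> A o0 o1 = B o0 o1 ->
  A o1 o0 = B o1 o0 -> A o1 o1 = B o1 o1 -> A = B.
Proof. move=> h1 h2 h3 h4; apply/matrixP; apply: ord2P; apply: ord2P => //. Qed.

Definition mx2 (x y z u : R) : 'M[R]_2 :=
  \matrix_(i, j) if i == o0 then (if j == o0 then x else y) else (if j == o0 then z else u).
Lemma mx2E00 x y z u : mx2 x y z u o0 o0 = x. Proof. by rewrite !mxE. Qed.
Lemma mx2E01 x y z u : mx2 x y z u o0 o1 = y. Proof. by rewrite !mxE. Qed.
Lemma mx2E10 x y z u : mx2 x y z u o1 o0 = z. Proof. by rewrite !mxE. Qed.
Lemma mx2E11 x y z u : mx2 x y z u o1 o1 = u. Proof. by rewrite !mxE. Qed.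

Variables v1 v2 : R.
Definition Vm w1 w2 := mx2 (v1 * w1) (v1 * w2) (v2 * w1) (v2 * w2).
Definition Nm := Vm v2 (- v1).
Definition Pm := mx2 1 0 (-1) 0.
Definition kk w1 w2 := w1 * v1 + w2 * v2.

Ltac mxring := rewrite /Nm /Vm /Pm /kk; apply: mxeq4;
  rewrite ?(mulE, addE, subE, oppE, oneE, zeroE, scaleE, mx2E00, mx2E01, mx2E10, mx2E11) /=; ring.

Lemma G_prod g h : g * h - 1 = (g - 1) + (h - 1) + (g - 1) * (h - 1).
Proof. mxring. Qed.
Lemma G_commid g h : (g - 1) * (h - 1) - (h - 1) * (g - 1) = g * h - h * g.
Proof. mxring. Qed.

Lemma G1 g h w1 w2 w1' w2' s be be' :
  g * h - 1 - Vm (w1 + w1' + kk w1 w2 * w1') (w2 + w2' + kk w1 w2 * w2')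
    - (s * (be + be' + s * be * be')) *: Pm
  = (s * be') *: (Vm w1 w2 * Pm) + (s * be) *: (Pm * Vm w1' w2')
    + (g - 1 - Vm w1 w2 - (s * be) *: Pm) + (h - 1 - Vm w1' w2' - (s * be') *: Pm)
    + (Vm w1 w2 + (s * be) *: Pm) * (h - 1 - Vm w1' w2' - (s * be') *: Pm)
    + (g - 1 - Vm w1 w2 - (s * be) *: Pm) * (h - 1).
Proof. mxring. Qed.

Lemma G1chi w1 w2 w1' w2' :
  1 + kk (w1 + w1' + kk w1 w2 * w1') (w2 + w2' + kk w1 w2 * w2')
  = (1 + kk w1 w2) * (1 + kk w1' w2').
Proof. rewrite /kk; ring. Qed.

Lemma G2 a b w1 w2 w1' w2' s be be' :
  (a - 1) * (b - 1) - (b - 1) * (a - 1) - (w2 * w1' - w1 * w2') *: Nm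
  = (s * be') *: (Vm w1 w2 * Pm - Pm * Vm w1 w2)
    + (s * be) *: (Pm * Vm w1' w2' - Vm w1' w2' * Pm)
    + (Vm w1 w2 + (s * be) *: Pm) * (b - 1 - Vm w1' w2' - (s * be') *: Pm)
    + (a - 1 - Vm w1 w2 - (s * be) *: Pm) * (b - 1)
    - (Vm w1' w2' + (s * be') *: Pm) * (a - 1 - Vm w1 w2 - (s * be) *: Pm)
    - (b - 1 - Vm w1' w2' - (s * be') *: Pm) * (a - 1).
Proof. mxring. Qed.

Lemma G3 c w1 w2 s be :
  c * Nm - (1 + kk w1 w2) *: Nm
  = (s * be) *: (Pm * Nm) + (c - 1 - Vm w1 w2 - (s * be) *: Pm) * Nm.
Proof. mxring. Qed.

Lemma G4 g h l m :
  g * h - 1 - (l + m) *: Nm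
  = (g - 1 - l *: Nm) + (h - 1 - m *: Nm) + l *: (Nm * (h - 1 - m *: Nm))
    + (g - 1 - l *: Nm) * (h - 1).
Proof. mxring. Qed.

Lemma G5 g h l m :
  (g - 1) * (h - 1) - (h - 1) * (g - 1)
  = l *: (Nm * (h - 1 - m *: Nm) - (h - 1 - m *: Nm) * Nm)
    + m *: ((g - 1 - l *: Nm) * Nm - Nm * (g - 1 - l *: Nm))
    + ((g - 1 - l *: Nm) * (h - 1 - m *: Nm) - (h - 1 - m *: Nm) * (g - 1 - l *: Nm)).
Proof. mxring. Qed.

Lemma Gmix M C m chi :
  M * C - (m * chi) *: Nm = m *: (M * Nm - chi *: Nm) + M * (C - m *: Nm).
Proof. mxring. Qed.

Lemma Gchi M c chi chi' :
  chi' *: (M * (chi *: Nm - c * Nm)) = (chi' * chi) *: (M * Nm) - chi' *: ((M * c) * Nm).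
Proof. mxring. Qed.

Lemma GM1 t : mx2 1 v1 0 (1 + v2) - 1 - Vm 0 1 - ((t - 1) * 0) *: Pm = 0.
Proof. mxring. Qed.
Lemma GM2T t : mx2 ((1 - v1) * t) 0 (1 - (1 + v2) * t) 1 - 1 - Vm (-1) 0 - ((t - 1) * 1) *: Pm
   = (t - 1) *: Vm (-1) 0.
Proof. mxring. Qed.
End Generic.

Section GenericField.
Variable F : fieldType.
Variables v1 v2 t : F.
Hypotheses (hx : 1 + v2 != 0) (hy : 1 - v1 != 0) (ht : t != 0).

Ltac mxfield := rewrite /Nm /Vm /Pm /kk; apply: mxeq4;
  rewrite ?(mulE, addE, subE, oppE, oneE, zeroE, scaleE, mx2E00, mx2E01, mx2E10, mx2E11) /=; field.

Lemma GM1inv : mx2 1 v1 0 (1 + v2) * mx2 1 (- v1 * (1 + v2)^-1) 0 (1 + v2)^-1 = 1.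
Proof. mxfield; done. Qed.
Lemma GM1invr : mx2 1 (- v1 * (1 + v2)^-1) 0 (1 + v2)^-1 - 1 - Vm v1 v2 0 (- (1 + v2)^-1)
   - ((t - 1) * 0) *: Pm F = 0.
Proof. mxfield; done. Qed.
Lemma GM2Tinv : mx2 ((1 - v1) * t) 0 (1 - (1 + v2) * t) 1 *
  mx2 ((1 - v1)^-1 * t^-1) 0 (- (1 - (1 + v2) * t) * (1 - v1)^-1 * t^-1) 1 = 1.
Proof. mxfield; by rewrite ?hy ?ht. Qed.
Lemma GM2Tinvr : mx2 ((1 - v1)^-1 * t^-1) 0 (- (1 - (1 + v2) * t) * (1 - v1)^-1 * t^-1) 1
   - 1 - Vm v1 v2 (1 - v1)^-1 0 - ((t - 1) * (- (1 - v1)^-1 * t^-1)) *: Pm F = 0.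
Proof. mxfield; by rewrite ?hy ?ht. Qed.
End GenericField.


Lemma fracsum_gen (F : fieldType) (a b c: F) n m : c != 0 -> a / c^+n + b / c^+m = (a * c^+m + b * c^+n)/c^+(n+m).
Proof. move=> h; rewrite exprD; field. by rewrite !expf_neq0. Qed.
Lemma fracmul_gen (F : fieldType) (a b c: F) n m : c != 0 -> (a / c^+n) * (b / c^+m) = (a * b)/c^+(n+m).
Proof. move=> h; rewrite exprD; field. by rewrite !expf_neq0. Qed.
Lemma inv_gen (F : fieldType) (a b : F) : a * b != 0 -> a^-1 = b / (a * b) ^+ 1.
Proof. move=> h; move: (h); rewrite mulf_eq0 negb_or => /andP[h1 h2]; rewrite expr1; field; by apply/andP. Qed.

Definition XY : Zxy := 'X_0 * 'X_1.
Lemma XY_eval : XY.@[fun _ => (1:int)] = 1.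
Proof. by rewrite /XY mevalM !mevalXU mulr1. Qed.
Lemma XYn_eval n : (XY ^+ n).@[fun _ => (1:int)] = 1.
Proof. elim: n => [|n IH]; first by rewrite expr0 meval1. by rewrite exprS mevalM IH XY_eval mulr1. Qed.
Lemma xyE : xR * yR = tofrac XY.
Proof. by rewrite /XY tofracM. Qed.
Lemma xy_neq0 : xR * yR != 0.
Proof.
rewrite xyE tofrac_eq0; apply/eqP => H.
by have := XY_eval; rewrite H meval0.
Qed.

Lemma fracsum (p q : Zxy) n m :
  tofrac p / (xR*yR)^+n + tofrac q / (xR*yR)^+m =
  tofrac (p * XY^+m + q * XY^+n) / (xR*yR)^+(n+m).
Proof.
by rewrite fracsum_gen ?xy_neq0 // tofracD !tofracM !tofracXn -xyE.
Qed.
Lemma fracmul (p q : Zxy) n m :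
  (tofrac p / (xR*yR)^+n) * (tofrac q / (xR*yR)^+m) =
  tofrac (p * q) / (xR*yR)^+(n+m).
Proof.
by rewrite fracmul_gen ?xy_neq0 // tofracM.
Qed.

Lemma inR_add a b : inR a -> inR b -> inR (a + b).
Proof. move=> [p [n ->]] [q [m ->]]; rewrite fracsum; by eexists; eexists. Qed.
Lemma inR_mul a b : inR a -> inR b -> inR (a * b).
Proof. move=> [p [n ->]] [q [m ->]]; rewrite fracmul; by eexists; eexists. Qed.
Lemma inR_opp a : inR a -> inR (- a).
Proof. move=> [p [n ->]]; exists (-p), n; by rewrite tofracN mulNr. Qed.
Lemma inR_sub a b : inR a -> inR b -> inR (a - b).
Proof. by move=> ha hb; apply: inR_add => //; apply: inR_opp. Qed.
Lemma inR_tofrac p : inR (tofrac p).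
Proof. by exists p, 0%N; rewrite expr0 divr1. Qed.
Lemma inR1 : inR 1.
Proof. by rewrite -tofrac1; apply: inR_tofrac. Qed.
Lemma inR0 : inR 0.
Proof. by rewrite -tofrac0; apply: inR_tofrac. Qed.
Lemma inR_x : inR xR. Proof. exact: inR_tofrac. Qed.
Lemma inR_y : inR yR. Proof. exact: inR_tofrac. Qed.
Lemma inR_xinv : inR xR^-1.
Proof. exists 'X_1, 1%N; exact: inv_gen xy_neq0. Qed.
Lemma inR_yinv : inR yR^-1.
Proof. exists ('X_0), 1%N; have h : yR * xR != 0 by rewrite mulrC xy_neq0. by rewrite (inv_gen h) [yR * xR]mulrC. Qed.
Lemma inR_nat (n : nat) : inR n%:R.
Proof. by rewrite -tofracMn -[_%:R]/(1 *+ n) ; apply: inR_tofrac. Qed.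
Lemma inR_exp a n : inR a -> inR (a ^+ n).
Proof. move=> h; elim: n => [|n IH]; [rewrite expr0; exact inR1|rewrite exprS; exact: inR_mul]. Qed.

Lemma inSigma_R a : inSigma a -> inR a.
Proof. by move=> [p [n [-> _]]]; exists p, n. Qed.
Lemma inSigma_add a b : inSigma a -> inSigma b -> inSigma (a + b).
Proof.
move=> [p [n [-> hp]]] [q [m [-> hq]]]; rewrite fracsum; eexists; eexists; split; first by [].
by rewrite mevalD !mevalM hp hq !mul0r addr0.
Qed.
Lemma inSigma_mul a b : inR a -> inSigma b -> inSigma (a * b).
Proof.
move=> [p [n ->]] [q [m [-> hq]]]; rewrite fracmul; eexists; eexists; split; first by [].
by rewrite mevalM hq mulr0.
Qed.
Lemma inSigma_opp a : inSigma a -> inSigma (- a).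
Proof. move=> h; rewrite -mulN1r; apply: inSigma_mul => //; apply: inR_opp; exact: inR1. Qed.
Lemma inSigma_x1 : inSigma (xR - 1).
Proof. exists ('X_0 - 1), 0%N; split; first by rewrite expr0 divr1 tofracB tofrac1.
by rewrite mevalB mevalXU meval1 subrr. Qed.
Lemma inSigma_y1 : inSigma (yR - 1).
Proof. exists ('X_1 - 1), 0%N; split; first by rewrite expr0 divr1 tofracB tofrac1.
by rewrite mevalB mevalXU meval1 subrr. Qed.

Inductive SP : nat -> Kxy -> Prop :=
| SP0 a : inR a -> SP 0 a
| SPz b : SP b 0
| SPadd b a c : SP b a -> SP b c -> SP b (a + c)
| SPmul b a c : inSigma a -> SP b c -> SP b.+1 (a * c).

Lemma SP_R b a : SP b a -> inR a.
Proof.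
elim=> {b a} [a h|b|b a c _ h1 _ h2|b a c h _ h2]; first by [].
- exact: inR0.
- exact: inR_add.
- by apply: inR_mul => //; apply: inSigma_R.
Qed.
Lemma SP_Rmul b r a : inR r -> SP b a -> SP b (r * a).
Proof.
move=> hr h; elim: h => {b a} [a h|b|b a c _ h1 _ h2|b a c h _ h2].
- by apply: SP0; apply: inR_mul.
- by rewrite mulr0; apply: SPz.
- by rewrite mulrDr; apply: SPadd.
- by rewrite mulrCA; apply: SPmul.
Qed.
Lemma SP_mul b c a e : SP b a -> SP c e -> SP (b + c) (a * e).
Proof.
move=> h he; elim: h => {b a} [a h|b|b a c' _ h1 _ h2|b a c' h _ h2].
- by rewrite add0n; apply: SP_Rmul.
- by rewrite mul0r; apply: SPz.
- by rewrite mulrDl; apply: SPadd.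
- by rewrite -mulrA addSn; apply: SPmul.
Qed.
Lemma SP_S b a : SP b.+1 a -> SP b a.
Proof.
move=> h; move Eb: b.+1 h => b' h; elim: h b Eb => {b' a} [a h|b'|b' a c _ h1 _ h2|b' a c h h' _] b Eb //.
- exact: SPz.
- by apply: SPadd; [apply: h1|apply: h2].
- case: Eb => ->; apply: SP_Rmul => //; exact: inSigma_R.
Qed.
Lemma SP_mono b b' a : (b' <= b)%N -> SP b a -> SP b' a.
Proof.
move=> /subnK <-; elim: (b - b')%N => [|n IH] h; first by rewrite add0n in h.
by apply: IH; apply: SP_S; rewrite addSn in h.
Qed.
Lemma SP_opp b a : SP b a -> SP b (- a).
Proof. move=> h; rewrite -mulN1r; apply: SP_Rmul => //; apply: inR_opp; exact: inR1. Qed.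
Lemma SP_sub b a c : SP b a -> SP b c -> SP b (a - c).
Proof. by move=> h1 h2; apply: SPadd => //; apply: SP_opp. Qed.
Lemma SP_sig a : inSigma a -> SP 1 a.
Proof. by move=> h; rewrite -[a]mulr1; apply: SPmul => //; apply: SP0; apply: inR1. Qed.

Lemma SP_pow b a : SP b a -> inSigmaPow b a.
Proof.
elim=> {b a} [a h|b|b a c _ h1 _ h2|b a c h _ h']; first by [].
- case: b => [|b]; first exact: inR0.
  by exists [::]; split; [move=> bc; rewrite in_nil|rewrite big_nil].
- case: b h1 h2 => [|b] /= h1 h2; first exact: inR_add.
  case: h1 => s1 [hs1 ->]; case: h2 => s2 [hs2 ->].
  exists (s1 ++ s2); split; last by rewrite big_cat.
  by move=> bc; rewrite mem_cat => /orP[/hs1|/hs2].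
- exists [:: (a, c)]; split; last by rewrite big_seq1.
  move=> bc; rewrite inE => /eqP -> /=; by split.
Qed.

Definition polyI b (p : {poly Kxy}) := forall i, SP b p`_i.

Lemma polyI0 b : polyI b 0.
Proof. by move=> i; rewrite coef0; apply: SPz. Qed.
Lemma polyI_add b p q : polyI b p -> polyI b q -> polyI b (p + q).
Proof. by move=> hp hq i; rewrite coefD; apply: SPadd. Qed.
Lemma polyI_opp b p : polyI b p -> polyI b (- p).
Proof. by move=> hp i; rewrite coefN; apply: SP_opp. Qed.
Lemma polyI_sub b p q : polyI b p -> polyI b q -> polyI b (p - q).
Proof. by move=> hp hq; apply: polyI_add => //; apply: polyI_opp. Qed.
Lemma polyI_mono b b' p : (b' <= b)%N -> polyI b p -> polyI b' p.
Proof. by move=> hb hp i; apply: SP_mono (hp i). Qed.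
Lemma polyI_mul b c p q : polyI b p -> polyI c q -> polyI (b + c) (p * q).
Proof.
move=> hp hq i; rewrite coefM; apply: (big_ind (SP (b + c))); first exact: SPz.
- by move=> x y; apply: SPadd.
- by move=> j _; apply: SP_mul.
Qed.
Lemma polyI_C b c : SP b c -> polyI b c%:P.
Proof. by move=> h i; rewrite coefC; case: (i == 0)%N => //; apply: SPz. Qed.
Lemma polyI_1 : polyI 0 1.
Proof. by apply: polyI_C; apply: SP0; apply: inR1. Qed.
Lemma polyI_X : polyI 0 'X.
Proof. move=> i; rewrite coefX; case: (i == 1)%N; [apply: SP0; exact: inR1|exact: SPz]. Qed.
Lemma polyI_mul0 b p q : polyI 0 p -> polyI b q -> polyI b (p * q).
Proof. by move=> hp hq; rewrite -[b]add0n; apply: polyI_mul. Qed.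
Lemma polyI_exp p n : polyI 0 p -> polyI 0 (p ^+ n).
Proof. move=> h; elim: n => [|n IH]; [rewrite expr0; exact: polyI_1|rewrite exprS; exact: polyI_mul0]. Qed.
Lemma polyI_Xm1 : polyI 0 ('X - 1).
Proof. apply: polyI_sub; [exact: polyI_X|exact: polyI_1]. Qed.
Lemma polyI_Xp1 : polyI 0 ('X + 1).
Proof. apply: polyI_add; [exact: polyI_X|exact: polyI_1]. Qed.
Lemma polyI_comp b p q : polyI b p -> polyI 0 q -> polyI b (p \Po q).
Proof.
move=> hp hq i; rewrite comp_polyE coef_sum; apply: (big_ind (SP b)); first exact: SPz.
- by move=> x y; apply: SPadd.
- move=> j _; rewrite coefZ -[b]addn0; apply: SP_mul => //; exact: polyI_exp.
Qed.
Lemma polyI_R b p i : polyI b p -> inR p`_i.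
Proof. by move=> h; apply: SP_R (h i). Qed.

Definition Q a b (f : Fld) := exists p n, polyI b p /\ f = tofrac (('X - 1) ^+ a * p) / tF ^+ n.

Lemma tF_neq0 : tF != 0.
Proof. by rewrite /tF tofrac_eq0 polyX_eq0. Qed.

Lemma Q_add a b f g : Q a b f -> Q a b g -> Q a b (f + g).
Proof.
move=> [p [n [hp ->]]] [q [m [hq ->]]].
exists (p * 'X^m + q * 'X^n), (n + m)%N; split.
  apply: polyI_add; rewrite -[b]addn0; apply: polyI_mul => //; apply: polyI_exp; exact: polyI_X.
rewrite fracsum_gen ?tF_neq0 //; congr (_ / _).
by rewrite /tF -!tofracXn -!tofracM -tofracD mulrDr !mulrA.
Qed.
Lemma Q_mul a b c e f g : Q a b f -> Q c e g -> Q (a + c) (b + e) (f * g).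
Proof.
move=> [p [n [hp ->]]] [q [m [hq ->]]].
exists (p * q), (n + m)%N; split; first exact: polyI_mul.
rewrite fracmul_gen ?tF_neq0 //; congr (_ / _).
by rewrite -tofracM exprD -!mulrA [p * (_ * q)]mulrCA.
Qed.
Lemma Q_mono a b a' b' f : (a' <= a)%N -> (b' <= b)%N -> Q a b f -> Q a' b' f.
Proof.
move=> ha hb [p [n [hp ->]]].
exists (('X - 1) ^+ (a - a') * p), n; split.
  apply: polyI_mul0; [apply: polyI_exp; exact: polyI_Xm1|exact: polyI_mono hp].
by rewrite mulrA -exprD subnKC.
Qed.
Lemma Q_cF b c : SP b c -> Q 0 b (cF c).
Proof. move=> h; exists c%:P, 0%N; split; first exact: polyI_C.
by rewrite expr0 mul1r divr1. Qed.
Lemma Q_0 a b : Q a b 0.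
Proof. exists 0, 0%N; split; first exact: polyI0. by rewrite mulr0 tofrac0 mul0r. Qed.
Lemma Q_1 : Q 0 0 1.
Proof. exists 1, 0%N; split; first exact: polyI_1. by rewrite mulr1 expr0 tofrac1 divr1. Qed.
Lemma Q_tF : Q 0 0 tF.
Proof. exists 'X, 0%N; split; first exact: polyI_X. by rewrite expr0 mul1r divr1. Qed.
Lemma Q_tFinv : Q 0 0 tF^-1.
Proof. exists 1, 1%N; split; first exact: polyI_1. by rewrite expr0 mul1r tofrac1 expr1 div1r. Qed.
Lemma Q_s : Q 1 0 (tF - 1).
Proof. exists 1, 0%N; split; first exact: polyI_1.
by rewrite expr1 mulr1 expr0 divr1 tofracB tofrac1. Qed.
Lemma Q_opp a b f : Q a b f -> Q a b (- f).
Proof. move=> [p [n [hp ->]]]; exists (- p), n; split; first exact: polyI_opp.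
by rewrite mulrN tofracN mulNr. Qed.
Lemma Q_sub a b f g : Q a b f -> Q a b g -> Q a b (f - g).
Proof. by move=> h1 h2; apply: Q_add => //; apply: Q_opp. Qed.

Definition MQ a b (M : Mat) := forall i j, Q a b (M i j).
Lemma MQ_add a b M N : MQ a b M -> MQ a b N -> MQ a b (M + N).
Proof. by move=> h1 h2 i j; rewrite addE; apply: Q_add. Qed.
Lemma MQ_opp a b M : MQ a b M -> MQ a b (- M).
Proof. by move=> h1 i j; rewrite oppE; apply: Q_opp. Qed.
Lemma MQ_sub a b M N : MQ a b M -> MQ a b N -> MQ a b (M - N).
Proof. by move=> h1 h2 i j; rewrite subE; apply: Q_sub. Qed.
Lemma MQ_mul a b c e M N : MQ a b M -> MQ c e N -> MQ (a + c) (b + e) (M * N).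
Proof. by move=> h1 h2 i j; rewrite mulE; apply: Q_add; apply: Q_mul. Qed.
Lemma MQ_mono a b a' b' M : (a' <= a)%N -> (b' <= b)%N -> MQ a b M -> MQ a' b' M.
Proof. by move=> ha hb h i j; apply: Q_mono (h i j). Qed.
Lemma MQ_scale a b c e f M : Q c e f -> MQ a b M -> MQ (c + a) (e + b) (f *: M).
Proof. by move=> h1 h2 i j; rewrite scaleE; apply: Q_mul. Qed.
Lemma MQ_0 a b : MQ a b 0.
Proof. by move=> i j; rewrite zeroE; apply: Q_0. Qed.
Lemma MQ_1 : MQ 0 0 1.
Proof. move=> i j; rewrite oneE; case: (i == j); [exact: Q_1|exact: Q_0]. Qed.
Lemma MQ_mulle a b c e a' b' M N : MQ a b M -> MQ c e N ->
  (a' <= a + c)%N -> (b' <= b + e)%N -> MQ a' b' (M * N).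
Proof. by move=> h1 h2 ha hb; apply: MQ_mono ha hb _; apply: MQ_mul. Qed.
Lemma MQ_scalele a b c e a' b' f M : Q c e f -> MQ a b M ->
  (a' <= c + a)%N -> (b' <= e + b)%N -> MQ a' b' (f *: M).
Proof. by move=> h1 h2 ha hb; apply: MQ_mono ha hb _; apply: MQ_scale. Qed.
Lemma MQ_mx2 k l a b c d : Q k l a -> Q k l b -> Q k l c -> Q k l d -> MQ k l (mx2 a b c d).
Proof.
move=> ha hb hc hd; apply: ord2P; apply: ord2P;
by rewrite ?(mx2E00, mx2E01, mx2E10, mx2E11).
Qed.

Definition Ug (g : Mat) := g \is a GRing.unit /\ MQ 0 0 g /\ MQ 0 0 g^-1.
Lemma Ug1 : Ug 1.
Proof. by split; [exact: unitr1|split; [|rewrite invr1]; exact: MQ_1]. Qed.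
Lemma UgM g h : Ug g -> Ug h -> Ug (g * h).
Proof.
move=> [u1 [m1 i1]] [u2 [m2 i2]]. split. rewrite (unitrMl _ u2). exact: u1.
split; first exact: MQ_mul m1 m2. rewrite (invrM u1 u2). exact: MQ_mul i2 i1.
Qed.
Lemma UgV g : Ug g -> Ug g^-1.
Proof. by move=> [u1 [m1 i1]]; split; [rewrite unitrV|rewrite invrK]. Qed.
Lemma mx_inv_eq (g h : Mat) : g * h = 1 -> g^-1 = h.
Proof. move=> H; have [ug _] := mulmx1_unit H. by rewrite -[LHS]mulr1 -H (mulKr ug). Qed.


Lemma cFM a b : cF (a * b) = cF a * cF b. Proof. by rewrite /cF polyCM tofracM. Qed.
Lemma cFD a b : cF (a + b) = cF a + cF b. Proof. by rewrite /cF polyCD tofracD. Qed.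
Lemma cFN a : cF (- a) = - cF a. Proof. by rewrite /cF polyCN tofracN. Qed.
Lemma cFB a b : cF (a - b) = cF a - cF b. Proof. by rewrite cFD cFN. Qed.
Lemma cF1 : cF 1 = 1. Proof. by rewrite /cF tofrac1. Qed.
Lemma cF0 : cF 0 = 0. Proof. by rewrite /cF tofrac0. Qed.
Lemma cF_neq0 a : a != 0 -> cF a != 0.
Proof. by move=> h; rewrite /cF tofrac_eq0 polyC_eq0. Qed.

Definition V1 : Fld := cF (1 - yR).
Definition V2 : Fld := cF (xR - 1).
Definition VmF := Vm V1 V2.
Definition NmF := Nm V1 V2.
Definition PmF := Pm Fld.
Definition sF := tF - 1.

Lemma Q_R c : inR c -> Q 0 0 (cF c).
Proof. by move=> h; apply: Q_cF; apply: SP0. Qed.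
Lemma inSigma_1y : inSigma (1 - yR).
Proof. by rewrite -opprB; apply: inSigma_opp; apply: inSigma_y1. Qed.
Lemma Q_V1 : Q 0 1 V1.
Proof. by apply: Q_cF; apply: SP_sig; apply: inSigma_1y. Qed.
Lemma Q_V2 : Q 0 1 V2.
Proof. by apply: Q_cF; apply: SP_sig; apply: inSigma_x1. Qed.
Lemma MQ_Vm W1 W2 : Q 0 0 W1 -> Q 0 0 W2 -> MQ 0 1 (VmF W1 W2).
Proof.
move=> h1 h2; apply: MQ_mx2.
exact: Q_mul Q_V1 h1. exact: Q_mul Q_V1 h2. exact: Q_mul Q_V2 h1. exact: Q_mul Q_V2 h2.
Qed.
Lemma MQ_Nm : MQ 0 2 NmF.
Proof.
have hV1 := Q_V1. have hV2 := Q_V2. have hN := Q_opp hV1.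
apply: MQ_mx2. exact: Q_mul hV1 hV2. exact: Q_mul hV1 hN. exact (Q_mul hV2 hV2). exact: Q_mul hV2 hN.
Qed.
Lemma MQ_Pm : MQ 0 0 PmF.
Proof. apply: MQ_mx2. exact: Q_1. exact: Q_0. exact: Q_opp Q_1. exact: Q_0. Qed.
Lemma Q_sF : Q 1 0 sF. Proof. exact: Q_s. Qed.


Definition kkK := kk (1 - yR) (xR - 1).
Lemma cF_kk w1 w2 : cF (kkK w1 w2) = kk V1 V2 (cF w1) (cF w2).
Proof. by rewrite /kkK /kk cFD !cFM. Qed.
Lemma inR_kk w1 w2 : inR w1 -> inR w2 -> inR (kkK w1 w2).
Proof.
move=> h1 h2; apply: inR_add; apply: inR_mul => //.
  exact: inR_sub inR1 inR_y. exact: inR_sub inR_x inR1.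
Qed.

Definition InvD g w1 w2 c be := [/\ inR w1, inR w2, inR c & (1 + kkK w1 w2) * c = 1] /\ (Q 0 0 be /\
  MQ 1 1 (g - 1 - VmF (cF w1) (cF w2) - (sF * be) *: PmF)).
Definition Inv g := Ug g /\ exists w1 w2 c be, InvD g w1 w2 c be.

Lemma MQ_A w1 w2 be : inR w1 -> inR w2 -> Q 0 0 be -> MQ 0 0 (VmF (cF w1) (cF w2) + (sF * be) *: PmF).
Proof.
move=> h1 h2 hb; apply: MQ_add.
  apply: (MQ_mono (a:=0) (b:=1)) => //; apply: MQ_Vm; exact: Q_R.
apply: (MQ_scalele (a:=0) (b:=0) (c:=1) (e:=0)) => //; last exact: MQ_Pm.
exact: Q_mul Q_sF hb.
Qed.

Lemma Inv_mul g h : Inv g -> Inv h -> Inv (g * h).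
Proof.
move=> [ug [w1 [w2 [c [be [[hw1 hw2 hc hchi] [hbe hE]]]]]]].
move=> [uh [w1' [w2' [c' [be' [[hw1' hw2' hc' hchi'] [hbe' hE']]]]]]].
split; first exact: UgM.
have hk := inR_kk hw1 hw2.
exists (w1 + w1' + kkK w1 w2 * w1'), (w2 + w2' + kkK w1 w2 * w2'), (c * c'),
  (be + be' + sF * be * be'); split; [split|split].
- by apply: inR_add; [apply: inR_add|apply: inR_mul].
- by apply: inR_add; [apply: inR_add|apply: inR_mul].
- exact: inR_mul.
- by rewrite /kkK G1chi -/kkK mulrACA hchi hchi' mulr1.
- apply: Q_add; first exact: Q_add.
  apply: (Q_mono (a:=1) (b:=0)) => //; apply: (Q_mul (a:=1) (b:=0) (c:=0) (e:=0)) => //.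
  exact: Q_mul Q_sF hbe.
- rewrite !cFD !cFM !cF_kk /VmF /PmF G1 -/VmF -/PmF.
  have hA' := MQ_A hw1' hw2' hbe'.
  have hA := MQ_A hw1 hw2 hbe.
  have hV := MQ_Vm (Q_R hw1) (Q_R hw2).
  have hV' := MQ_Vm (Q_R hw1') (Q_R hw2').
  have hh : MQ 0 0 (h - 1) by apply: MQ_sub; [case: uh => _ []|exact: MQ_1].
  apply: MQ_add; last by apply: (MQ_mulle hE hh).
  apply: MQ_add; last by apply: (MQ_mulle hA hE').
  apply: MQ_add; last exact: hE'.
  apply: MQ_add; last exact: hE.
  apply: MQ_add.
    apply: (MQ_scalele (Q_mul Q_sF hbe') (MQ_mul hV MQ_Pm)) => //.
  apply: (MQ_scalele (Q_mul Q_sF hbe) (MQ_mul MQ_Pm hV')) => //.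
Qed.


Lemma gen_ind2 (S T : Mat -> Prop) : T 1 -> (forall a b, T a -> T b -> T (a * b)) ->
  (forall a, S a -> T a /\ T a^-1) -> forall g, gen S g -> T g.
Proof.
move=> h1 hM hS g; elim=> [|a b ha _ hb|a b ha _ hb]; first exact: h1.
- by apply: hM => //; case: (hS a ha).
- by apply: hM => //; case: (hS a ha).
Qed.

Lemma aux1 (R : comRingType) (a : R) : 1 - (1 - a) = a. Proof. ring. Qed.
Lemma aux2 (R : comRingType) (a : R) : 1 + (a - 1) = a. Proof. ring. Qed.
Lemma auxchi1 (F : fieldType) (x a : F) : x != 0 -> (1 + (0 * a + 1 * (x - 1))) * x^-1 = 1.
Proof. move=> h; field. exact: h. Qed.
Lemma auxchi2 (F : fieldType) (y a : F) : y != 0 -> (1 + ((-1) * (1 - y) + 0 * a)) * y^-1 = 1.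
Proof. move=> h; field. exact: h. Qed.
Lemma auxchi3 (F : fieldType) (x a : F) : x != 0 -> (1 + (0 * a + (- x^-1) * (x - 1))) * x = 1.
Proof. move=> h; field. exact: h. Qed.
Lemma auxchi4 (F : fieldType) (y a : F) : y != 0 -> (1 + (y^-1 * (1 - y) + 0 * a)) * y = 1.
Proof. move=> h; field. exact: h. Qed.

Lemma xR_neq0 : xR != 0.
Proof. have := xy_neq0; rewrite mulf_eq0 negb_or => /andP[h _]; exact: h. Qed.
Lemma yR_neq0 : yR != 0.
Proof. have := xy_neq0; rewrite mulf_eq0 negb_or => /andP[_ h]; exact: h. Qed.
Lemma X_E : 1 + V2 = cF xR. Proof. rewrite /V2 cFB cF1 aux2. reflexivity. Qed.
Lemma Y_E : 1 - V1 = cF yR. Proof. rewrite /V1 cFB cF1 aux1. reflexivity. Qed.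
Lemma hX : 1 + V2 != 0. Proof. rewrite X_E; apply: cF_neq0; exact: xR_neq0. Qed.
Lemma hY : 1 - V1 != 0. Proof. rewrite Y_E; apply: cF_neq0; exact: yR_neq0. Qed.
Lemma Xinv_E : (1 + V2)^-1 = cF (xR^-1).
Proof. apply: mulr1_eq. rewrite X_E -cFM (mulfV xR_neq0) cF1. reflexivity. Qed.
Lemma Yinv_E : (1 - V1)^-1 = cF (yR^-1).
Proof. apply: mulr1_eq. rewrite Y_E -cFM (mulfV yR_neq0) cF1. reflexivity. Qed.

Lemma M1E : M1 = mx2 1 V1 0 (1 + V2).
Proof. apply: mxeq4; rewrite !mxE /=; try reflexivity. rewrite X_E; reflexivity. Qed.
Lemma M2TE : M2T = mx2 ((1 - V1) * tF) 0 (1 - (1 + V2) * tF) 1.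
Proof. apply: mxeq4; rewrite !mxE /=; try reflexivity. rewrite Y_E; reflexivity. rewrite X_E; reflexivity. Qed.

Lemma Q0 f : Q 0 1 f -> Q 0 0 f.
Proof. exact: Q_mono. Qed.
Definition M1i : Mat := mx2 1 (- V1 / (1 + V2)) 0 (1 + V2)^-1.
Definition M2Ti : Mat := mx2 ((1 - V1)^-1 / tF) 0 (- (1 - (1 + V2) * tF) / (1 - V1) / tF) 1.
Lemma M1_M1i : M1 * M1i = 1. Proof. rewrite M1E; exact: (GM1inv V1 hX). Qed.
Lemma M2T_M2Ti : M2T * M2Ti = 1. Proof. rewrite M2TE; exact: (GM2Tinv V2 hY tF_neq0). Qed.
Lemma M1inv : M1^-1 = M1i. Proof. exact: mx_inv_eq M1_M1i. Qed.
Lemma M2Tinv : M2T^-1 = M2Ti. Proof. exact: mx_inv_eq M2T_M2Ti. Qed.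
Lemma Q_Xi : Q 0 0 (1 + V2)^-1. Proof. rewrite Xinv_E; exact: Q_R inR_xinv. Qed.
Lemma Q_Yi : Q 0 0 (1 - V1)^-1. Proof. rewrite Yinv_E; exact: Q_R inR_yinv. Qed.
Lemma Q_X : Q 0 0 (1 + V2). Proof. rewrite X_E; exact: Q_R inR_x. Qed.
Lemma Q_Y : Q 0 0 (1 - V1). Proof. rewrite Y_E; exact: Q_R inR_y. Qed.

Lemma Ug_M1 : Ug M1.
Proof.
have [u _] := mulmx1_unit M1_M1i.
split; first exact: u.
split; first by rewrite M1E; apply: MQ_mx2; [exact: Q_1|exact: Q0 Q_V1|exact: Q_0|exact: Q_X].
rewrite M1inv; apply: MQ_mx2; [exact: Q_1| |exact: Q_0|exact: Q_Xi].
exact: (Q_mul (Q_opp (Q0 Q_V1)) Q_Xi).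
Qed.
Lemma Ug_M2T : Ug M2T.
Proof.
have [u _] := mulmx1_unit M2T_M2Ti.
split; first exact: u.
split.
  rewrite M2TE; apply: MQ_mx2; [exact: Q_mul Q_Y Q_tF|exact: Q_0| |exact: Q_1].
  exact: (Q_sub Q_1 (Q_mul Q_X Q_tF)).
rewrite M2Tinv; apply: MQ_mx2; [exact: Q_mul Q_Yi Q_tFinv|exact: Q_0| |exact: Q_1].
exact: (Q_mul (Q_mul (Q_opp (Q_sub Q_1 (Q_mul Q_X Q_tF))) Q_Yi) Q_tFinv).
Qed.

Lemma Inv_M1 : Inv M1.
Proof.
split; first exact: Ug_M1.
exists 0, 1, xR^-1, 0; split; [split|split].
- exact: inR0.
- exact: inR1.
- exact: inR_xinv.
- rewrite /kkK /kk; exact: auxchi1 xR_neq0.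
- exact: Q_0.
- rewrite cF0 cF1 M1E /VmF /PmF /sF GM1; exact: MQ_0.
Qed.
Lemma Inv_M2T : Inv M2T.
Proof.
split; first exact: Ug_M2T.
exists (-1), 0, yR^-1, 1; split; [split|split].
- exact: inR_opp inR1.
- exact: inR0.
- exact: inR_yinv.
- rewrite /kkK /kk; exact: auxchi2 yR_neq0.
- exact: Q_1.
- rewrite cFN cF1 cF0 M2TE /VmF /PmF /sF GM2T.
  have hV := MQ_Vm (Q_opp Q_1) (Q_0 0 0). exact: (MQ_scalele Q_s hV).
Qed.
Lemma Inv_M1i : Inv M1^-1.
Proof.
split; first exact: UgV Ug_M1.
exists 0, (- xR^-1), xR, 0; split; [split|split].
- exact: inR0.
- exact: inR_opp inR_xinv.
- exact: inR_x.
- rewrite /kkK /kk; exact: auxchi3 xR_neq0.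
- exact: Q_0.
- rewrite M1inv cF0 cFN -Xinv_E /VmF /PmF /sF (GM1invr V1 tF hX); exact: MQ_0.
Qed.
Lemma Inv_M2Ti : Inv M2T^-1.
Proof.
split; first exact: UgV Ug_M2T.
exists yR^-1, 0, yR, (- (1 - V1)^-1 / tF); split; [split|split].
- exact: inR_yinv.
- exact: inR0.
- exact: inR_y.
- rewrite /kkK /kk; exact: auxchi4 yR_neq0.
- exact: (Q_mul (Q_opp Q_Yi) Q_tFinv).
- rewrite M2Tinv cF0 -Yinv_E /VmF /PmF /sF (GM2Tinvr V2 hY tF_neq0); exact: MQ_0.
Qed.
Lemma Inv_1 : Inv 1.
Proof. have := Inv_mul Inv_M1 Inv_M1i. rewrite (mulrV (proj1 Ug_M1)). exact. Qed.
Lemma Fgroup_Inv g : Fgroup g -> Inv g.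
Proof.
move=> hg; apply: (gen_ind2 _ _ _ hg); [exact: Inv_1|exact: Inv_mul|].
move=> a [->|->]; [split; [exact: Inv_M1|exact: Inv_M1i]|split; [exact: Inv_M2T|exact: Inv_M2Ti]].
Qed.


Definition comm (a b : Mat) := a^-1 * b^-1 * a * b.

Lemma comm_sub1 a b : a \is a GRing.unit -> b \is a GRing.unit ->
  comm a b - 1 = (b * a)^-1 * ((a - 1) * (b - 1) - (b - 1) * (a - 1)).
Proof.
move=> ua ub.
have uba : b * a \is a GRing.unit by rewrite (unitrMl _ ua); exact: ub.
rewrite G_commid mulrBr (mulVr uba) (invrM ub ua) /comm !mulrA. reflexivity.
Qed.
Lemma comm_inv_gen (R : unitRingType) (a b : R) : a \is a GRing.unit -> b \is a GRing.unit ->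
  (a^-1 * b^-1 * a * b) * (b^-1 * a^-1 * b * a) = 1.
Proof. move=> ua ub; rewrite !mulrA (mulrK ub) (mulrK ua) (mulrVK ub). exact: (mulVr ua). Qed.
Lemma comm_inv a b : a \is a GRing.unit -> b \is a GRing.unit -> (comm a b)^-1 = comm b a.
Proof.
move=> ua ub; apply: mx_inv_eq; exact: comm_inv_gen ua ub.
Qed.
Lemma Ug_comm a b : Ug a -> Ug b -> Ug (comm a b).
Proof. move=> ha hb; rewrite /comm; apply: UgM; last exact: hb. apply: UgM; last exact: ha. apply: UgM; exact: UgV. Qed.

Lemma comm_sub_ind (T T' : Mat -> Prop) : (forall g, T g -> Ug g) -> T' 1 ->
  (forall a b, T' a -> T' b -> T' (a * b)) -> (forall a b, T a -> T b -> T' (comm a b)) ->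
  forall g, commutator_subgroup T g -> T' g.
Proof.
move=> hU h1 hM hC g hg; apply: (gen_ind2 _ _ _ hg); [exact: h1|exact: hM|].
move=> c [a [b [ha [hb ->]]]]; split; first exact: hC.
have [ua _] := hU a ha. have [ub _] := hU b hb.
have := comm_inv ua ub; rewrite /comm => ->; exact: hC.
Qed.

Definition Hs g := Ug g /\ exists l, inR l /\ MQ 1 1 (g - 1 - cF l *: NmF).
Definition Gs a b g := Ug g /\ MQ a b (g - 1).

Lemma MQ_N00 : MQ 0 0 NmF. Proof. exact: MQ_mono MQ_Nm. Qed.
Lemma Ug_1sub g : Ug g -> MQ 0 0 (g - 1).
Proof. move=> [_ [h _]]; apply: MQ_sub h MQ_1. Qed.

Lemma Hs_1 : Hs 1.
Proof. split; first exact: Ug1. exists 0; split; first exact: inR0.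
rewrite cF0 scale0r subrr subr0; exact: MQ_0. Qed.
Lemma Hs_mul g h : Hs g -> Hs h -> Hs (g * h).
Proof.
move=> [ug [l [hl hE]]] [uh [m [hm hE']]]; split; first exact: UgM.
exists (l + m); split; first exact: inR_add.
rewrite cFD /NmF G4 -/NmF.
apply: MQ_add; last exact: (MQ_mulle hE (Ug_1sub uh)).
apply: MQ_add; first exact: MQ_add hE hE'.
exact: (MQ_scalele (Q_R hl) (MQ_mul MQ_Nm hE')).
Qed.
Lemma Gs_1 a b : Gs a b 1.
Proof. split; first exact: Ug1. rewrite subrr; exact: MQ_0. Qed.
Lemma Gs_mul a b g h : Gs a b g -> Gs a b h -> Gs a b (g * h).
Proof.
move=> [ug hg] [uh hh]; split; first exact: UgM.
rewrite G_prod; apply: MQ_add; first exact: MQ_add.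
apply: (MQ_mulle hg hh); [exact: leq_addr|exact: leq_addr].
Qed.
Lemma Gs_comm a b g h : Gs a b g -> Gs a b h -> Gs (a + a) (b + b) (comm g h).
Proof.
move=> [ug hg] [uh hh]; split; first exact: Ug_comm.
have [u1 _] := ug. have [u2 _] := uh.
rewrite (comm_sub1 u1 u2).
have [_ [_ hM]] := UgM uh ug.
exact: (MQ_mul hM (MQ_sub (MQ_mul hg hh) (MQ_mul hh hg))).
Qed.

Lemma Hs_comm a b : Hs a -> Hs b -> Gs 1 2 (comm a b).
Proof.
move=> [ua [l [hl hE]]] [ub [m [hm hE']]]; split; first exact: Ug_comm.
have [u1 _] := ua. have [u2 _] := ub.
rewrite (comm_sub1 u1 u2).
have [_ [_ hM]] := UgM ub ua.
rewrite /NmF (@G5 _ V1 V2 a b (cF l) (cF m)) -/NmF.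
apply: (MQ_mulle (c:=1) (e:=2) hM) => //.
apply: MQ_add; first apply: MQ_add.
- apply: (MQ_scalele (a:=1) (b:=2) (Q_R hl)) => //.
  apply: MQ_sub; [exact: (MQ_mulle MQ_Nm hE')|exact: (MQ_mulle hE' MQ_Nm)].
- apply: (MQ_scalele (a:=1) (b:=2) (Q_R hm)) => //.
  apply: MQ_sub; [exact: (MQ_mulle hE MQ_Nm)|exact: (MQ_mulle MQ_Nm hE)].
- apply: MQ_sub; [exact: (MQ_mulle hE hE')|exact: (MQ_mulle hE' hE)].
Qed.

Lemma Gchi2 (R : comRingType) (v1 v2 : R) (M c : 'M[R]_2) (chi chi' : R) :
  M * c = 1 -> chi' * chi = 1 ->
  M * Nm v1 v2 - chi' *: Nm v1 v2 = chi' *: (M * (chi *: Nm v1 v2 - c * Nm v1 v2)).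
Proof. by move=> h1 h2; rewrite Gchi h2 scale1r h1 mul1r. Qed.

Lemma InvN c u1 u2 cc bb : InvD c u1 u2 cc bb -> MQ 1 1 (c * NmF - cF (1 + kkK u1 u2) *: NmF).
Proof.
move=> [_ [hbb hE]]. rewrite cFD cF1 cF_kk /NmF (@G3 _ V1 V2 c (cF u1) (cF u2) sF bb) -/NmF.
apply: MQ_add.
- apply: (MQ_scalele (a:=0) (b:=2) (Q_mul Q_sF hbb) (MQ_mul MQ_Pm MQ_Nm)) => //.
- apply: (MQ_mulle (c:=0) (e:=2) hE MQ_Nm) => //.
Qed.

Lemma Inv_comm a b : Inv a -> Inv b -> Hs (comm a b).
Proof.
move=> ha hb.
have [ua [w1 [w2 [c [be [[hw1 hw2 hc hchi] [hbe hE]]]]]]] := ha.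
have [ub [w1' [w2' [c' [be' [[hw1' hw2' hc' hchi'] [hbe' hE']]]]]]] := hb.
have [uba [u1 [u2 [cc [bb hD]]]]] := Inv_mul hb ha.
have hD' := hD. case: hD' => [[hu1 hu2 hcc hchi''] [hbb hE'']].
split; first exact: Ug_comm.
exists ((w2 * w1' - w1 * w2') * cc); split.
  apply: inR_mul; last exact: hcc. apply: inR_sub; exact: inR_mul.
have [ua1 _] := ua. have [ub1 _] := ub.
have [_ [_ hM]] := uba.
rewrite (comm_sub1 ua1 ub1) cFM.
rewrite /NmF (@Gmix _ V1 V2 (b * a)^-1 _ (cF (w2 * w1' - w1 * w2')) (cF cc)) -/NmF.
apply: MQ_add.
- have eq : (b * a)^-1 * NmF - cF cc *: NmF
      = cF cc *: ((b * a)^-1 * (cF (1 + kkK u1 u2) *: NmF - (b * a) * NmF)).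
    apply: Gchi2; first exact: (mulVr (proj1 uba)).
    rewrite -cFM. have e1 : cc * (1 + kkK u1 u2) = 1 by rewrite mulrC; exact: hchi''.
    rewrite e1; exact: cF1.
  have hN := MQ_opp (InvN hD). rewrite opprB in hN.
  rewrite eq.
  apply: (MQ_scalele (a:=1) (b:=1) (c:=0) (e:=0)) => //.
    apply: Q_R; apply: inR_sub; exact: inR_mul.
  apply: (MQ_scalele (a:=1) (b:=1) (c:=0) (e:=0) (Q_R hcc)) => //.
  apply: (MQ_mulle (a:=0) (b:=0) (c:=1) (e:=1) hM) => //.
- rewrite cFB !cFM /NmF (@G2 _ V1 V2 a b (cF w1) (cF w2) (cF w1') (cF w2') sF be be') -/NmF.
  apply: (MQ_mulle (a:=0) (b:=0) (c:=1) (e:=1) hM) => //.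
  have hV := MQ_Vm (Q_R hw1) (Q_R hw2).
  have hV' := MQ_Vm (Q_R hw1') (Q_R hw2').
  apply: MQ_sub; [apply: MQ_sub; [apply: MQ_add; [apply: MQ_add; [apply: MQ_add|]|]|]|].
  + apply: (MQ_scalele (a:=0) (b:=1) (Q_mul Q_sF hbe')) => //.
    exact: (MQ_sub (MQ_mul hV MQ_Pm) (MQ_mul MQ_Pm hV)).
  + apply: (MQ_scalele (a:=0) (b:=1) (Q_mul Q_sF hbe)) => //.
    exact: (MQ_sub (MQ_mul MQ_Pm hV') (MQ_mul hV' MQ_Pm)).
  + exact: (MQ_mulle (MQ_A hw1 hw2 hbe) hE').
  + exact: (MQ_mulle hE (Ug_1sub ub)).
  + exact: (MQ_mulle (MQ_A hw1' hw2' hbe') hE).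
  + exact: (MQ_mulle hE' (Ug_1sub ua)).
Qed.


Lemma derived1 g : derived 1 g -> Hs g.
Proof.
move=> hg; apply: (@comm_sub_ind Fgroup Hs _ _ _ _ g hg).
- by move=> x hx; case: (Fgroup_Inv hx).
- exact: Hs_1.
- exact: Hs_mul.
- move=> a b ha hb; apply: Inv_comm; exact: Fgroup_Inv.
Qed.
Lemma derived2 g : derived 2 g -> Gs 1 2 g.
Proof.
move=> hg; apply: (@comm_sub_ind (derived 1) (Gs 1 2) _ _ _ _ g hg).
- by move=> x hx; case: (derived1 hx).
- exact: Gs_1.
- exact: Gs_mul.
- move=> a b ha hb; apply: Hs_comm; exact: derived1.
Qed.
Lemma derivedk k g : derived k.+2 g -> Gs (2 ^ k) (2 ^ k.+1) g.
Proof.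
elim: k g => [|k IH] g hg; first exact: derived2 hg.
apply: (@comm_sub_ind (derived k.+2) (Gs (2 ^ k.+1) (2 ^ k.+2)) _ _ _ _ g hg).
- by move=> x hx; case: (IH x hx).
- exact: Gs_1.
- exact: Gs_mul.
- move=> a b ha hb.
  have -> : (2 ^ k.+1 = 2 ^ k + 2 ^ k)%N by rewrite expnS mul2n addnn.
  have -> : (2 ^ k.+2 = 2 ^ k.+1 + 2 ^ k.+1)%N by rewrite (expnS 2 k.+1) mul2n addnn.
  apply: Gs_comm; exact: IH.
Qed.

Section GPS.
Variable K : comRingType.
Definition gps_mul (f g : nat -> K) n := \sum_(i < n.+1) f i * g (n - i)%N.
Definition gps_one (n : nat) : K := if n == 0%N then 1 else 0.
Definition gps_pow (f : nat -> K) n := iter n (gps_mul f) gps_one.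
Definition gtinv (n : nat) : K := (-1) ^+ n.
Definition tp (f : nat -> K) N : {poly K} := \poly_(i < N) f i.
Definition eqN N (p q : {poly K}) := forall i, (i < N)%N -> p`_i = q`_i.

Lemma eqN_trans N p q r : eqN N p q -> eqN N q r -> eqN N p r.
Proof. by move=> h1 h2 i hi; rewrite h1 // h2. Qed.
Lemma eqN_mul N p q p' q' : eqN N p p' -> eqN N q q' -> eqN N (p * q) (p' * q').
Proof.
move=> h1 h2 i hi; rewrite !coefM; apply: eq_bigr => j _.
have hj : (j < N)%N by apply: leq_ltn_trans hi; rewrite -ltnS.
have hij : (i - j < N)%N by apply: leq_ltn_trans hi; exact: leq_subr.
by rewrite h1 // h2.
Qed.
Lemma eqN_pow N p q n : eqN N p q -> eqN N (p ^+ n) (q ^+ n).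
Proof. move=> h; elim: n => [|n IH]; first by move=> i. by rewrite !exprS; apply: eqN_mul. Qed.
Lemma tp_mul f g N : eqN N (tp (gps_mul f g) N) (tp f N * tp g N).
Proof.
move=> i hi; rewrite coef_poly hi coefM /gps_mul; apply: eq_bigr => j _.
have hj : (j < N)%N by apply: leq_ltn_trans hi; rewrite -ltnS.
have hij : (i - j < N)%N by apply: leq_ltn_trans hi; exact: leq_subr.
by rewrite !coef_poly hj hij.
Qed.
Lemma tp_poly (p : {poly K}) N : eqN N (tp (fun n => p`_n) N) p.
Proof. by move=> i hi; rewrite coef_poly hi. Qed.
Lemma tp_powE n N : eqN N (tp (gps_pow gtinv n) N) (tp gtinv N ^+ n).
Proof.
elim: n => [|n IH].
  by move=> i hi; rewrite coef_poly hi expr0 coef1 /gps_pow /= /gps_one; case: (i == 0%N).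
have -> : gps_pow gtinv n.+1 = gps_mul gtinv (gps_pow gtinv n) by [].
rewrite exprS. exact: (eqN_trans (@tp_mul gtinv (gps_pow gtinv n) N) (eqN_mul (fun i _ => erefl) IH)).
Qed.
Lemma tp_Xp1 N : eqN N (('X + 1) * tp gtinv N) 1.
Proof.
move=> i hi; rewrite mulrDl mul1r coefD coefXM coef1 /gtinv.
case: i hi => [|i] hi /=; first by rewrite add0r coef_poly hi expr0.
rewrite !coef_poly hi (ltnW hi) exprS mulN1r subrr. done.
Qed.
Lemma comp_exp (p r : {poly K}) n : (p ^+ n) \Po r = (p \Po r) ^+ n.
Proof. elim: n => [|n IH]; first by rewrite !expr0 -polyC1 comp_polyC. by rewrite !exprS comp_polyM IH. Qed.
Lemma PS1 n k : gps_mul (fun m => (('X + 1) ^+ n)`_m) (gps_pow gtinv n) k = gps_one k.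
Proof.
have := @tp_mul (fun m => (('X + 1) ^+ n)`_m) (gps_pow gtinv n) k.+1.
move=> /(_ k (ltnSn k)); rewrite coef_poly ltnSn => ->.
have h1 := eqN_mul (@tp_poly (('X + 1) ^+ n) k.+1) (@tp_powE n k.+1).
rewrite h1 // -exprMn (@eqN_pow k.+1 _ _ n (@tp_Xp1 k.+1)) // expr1n coef1 /gps_one.
by case: (k == 0%N).
Qed.
End GPS.


Lemma pow_R n k : inR (ps_pow ps_tinv n k).
Proof.
elim: n k => [|n IH] k.
  rewrite /ps_pow /= /ps_one; case: (k == 0%N); [exact: inR1|exact: inR0].
change (inR (ps_mul ps_tinv (ps_pow ps_tinv n) k)); rewrite /ps_mul.
apply: (big_ind inR); [exact: inR0|exact: inR_add|].
move=> j _; apply: inR_mul; [exact: inR_exp (inR_opp inR1)|exact: IH].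
Qed.

Lemma ps_mulD p q T m : ps_mul (ps_of_poly (p + q)) T m
  = ps_mul (ps_of_poly p) T m + ps_mul (ps_of_poly q) T m.
Proof. rewrite /ps_mul /ps_of_poly -big_split /=; apply: eq_bigr => i _; by rewrite coefD mulrDl. Qed.
Lemma ps_mulC c p T m : ps_mul (ps_of_poly (c%:P * p)) T m = c * ps_mul (ps_of_poly p) T m.
Proof. rewrite /ps_mul /ps_of_poly mulr_sumr; apply: eq_bigr => i _; by rewrite coefCM mulrA. Qed.

Lemma shift_part b d (q : {poly Kxy}) (T : ps) m : polyI b q -> (forall k, inR (T k)) ->
  ((m < d)%N -> ps_mul (ps_of_poly ('X^d * q)) T m = 0) /\
  SP b (ps_mul (ps_of_poly ('X^d * q)) T m).
Proof.
move=> hq hT; split.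
  move=> hm; rewrite /ps_mul /ps_of_poly; apply: big1 => j _.
  have hj : (j < d)%N by apply: leq_ltn_trans hm; rewrite -ltnS.
  by rewrite coefXnM hj mul0r.
rewrite /ps_mul /ps_of_poly; apply: (big_ind (SP b)); [exact: SPz|exact: SPadd|].
move=> j _; rewrite coefXnM; case: (j < d)%N; first by rewrite mul0r; exact: SPz.
rewrite mulrC; apply: SP_Rmul; [exact: hT|exact: hq].
Qed.

Lemma frac_gen (F : fieldType) (f c b t : F) n : t != 0 -> f - c = b / t ^+ n ->
  f = (c * t ^+ n + b) / t ^+ n.
Proof. move=> ht h; have -> : f = c + b / t ^+ n by rewrite -h addrC subrK. field. exact: expf_neq0. Qed.

Lemma comp_Xm1 : ('X - 1) \Po ('X + 1) = 'X :> {poly Kxy}.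
Proof. by rewrite comp_polyB comp_polyX -polyC1 comp_polyC polyC1 addrK. Qed.

Lemma entry_exp (f : Fld) (dl : bool) d : (0 < d)%N -> Q d (2 * d) (f - dl%:R) ->
  exists a : ps, [/\ s_expansion f a, a 0%N = dl%:R, (forall n, (0 < n < d)%N -> a n = 0) &
    (forall n, (d <= n)%N -> inR (a n) /\ inSigmaPow (2 * d) (a n))].
Proof.
move=> hd [p [n [hp hf]]].
pose P : {poly Kxy} := (dl%:R)%:P * 'X^n + ('X - 1) ^+ d * p.
have hP : polyI 0 P.
  apply: polyI_add.
    apply: polyI_mul0; [apply: polyI_C; apply: SP0; exact: inR_nat|apply: polyI_exp; exact: polyI_X].
  apply: polyI_mul0; [apply: polyI_exp; exact: polyI_Xm1|exact: (polyI_mono (leq0n _) hp)].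
pose T := ps_pow ps_tinv n.
pose Z := ps_mul (ps_of_poly ('X^d * (p \Po ('X + 1)))) T.
have hq : polyI (2 * d) (p \Po ('X + 1)) := polyI_comp hp polyI_Xp1.
have hZ m := @shift_part (2 * d) d _ T m hq (pow_R n).
have ha : forall m, ps_mul (ps_of_poly (P \Po ('X + 1))) T m = dl%:R * ps_one m + Z m.
  move=> m; rewrite /P comp_polyD !comp_polyM comp_polyC !comp_exp comp_Xm1 comp_polyX.
  rewrite ps_mulD ps_mulC; congr (_ * _ + _); exact: (@PS1 Kxy n m).
exists (ps_mul (ps_of_poly (P \Po ('X + 1))) T); split.
- exists P, n; split; first by move=> i; exact: polyI_R hP.
  split; last reflexivity.
  rewrite /P tofracD tofracM tofracXn -/tF polyC_natr rmorph_nat.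
  exact: frac_gen tF_neq0 hf.
- rewrite ha /ps_one /= /Z; have [h0 _] := hZ 0%N; rewrite h0 // mulr1 addr0; reflexivity.
- move=> m /andP[hm0 hmd]; rewrite ha /Z; have [h _] := hZ m; rewrite h // /ps_one.
  have -> : (m == 0%N) = false by rewrite eqn0Ngt hm0.
  by rewrite mulr0 addr0.
- move=> m hm; rewrite ha /ps_one.
  have hm0 : (0 < m)%N := leq_trans hd hm.
  have -> : (m == 0%N) = false by rewrite eqn0Ngt hm0.
  rewrite mulr0 add0r /Z; have [_ hs] := hZ m; split; [exact: SP_R hs|exact: SP_pow hs].
Qed.

Theorem lemma7 (k : nat) (g : Mat) :
  (1 < k)%N -> derived k g ->
  let d := (2 ^ (k - 2))%N in
  exists A : nat -> 'M[Kxy]_2,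
    (forall i j : 'I_2, s_expansion (g i j) (fun n => A n i j)) /\
    A 0%N = 1 /\
    (forall n, (0 < n < d)%N -> A n = 0) /\
    (forall n, (d <= n)%N -> forall i j : 'I_2,
        inR (A n i j) /\ inSigmaPow (2 * d) (A n i j)).
Proof.
case: k => [|[|k]] // _ hg d.
have [ug hG] := derivedk hg.
have hdk : d = (2 ^ k)%N by rewrite /d !subSS subn0.
have h2d : (2 * d = 2 ^ k.+1)%N by rewrite hdk expnS.
have hQ i j : Q d (2 * d) (g i j - (i == j)%:R).
  by rewrite hdk -hdk h2d hdk; have := hG i j; rewrite subE oneE.
have hd0 : (0 < d)%N by rewrite hdk expn_gt0.
have [a00 [e00 i00 z00 s00]] := entry_exp hd0 (hQ o0 o0).
have [a01 [e01 i01 z01 s01]] := entry_exp hd0 (hQ o0 o1).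
have [a10 [e10 i10 z10 s10]] := entry_exp hd0 (hQ o1 o0).
have [a11 [e11 i11 z11 s11]] := entry_exp hd0 (hQ o1 o1).
exists (fun m => mx2 (a00 m) (a01 m) (a10 m) (a11 m)); split; [|split; [|split]].
- apply: ord2P; apply: ord2P.
  + have -> : (fun n => mx2 (a00 n) (a01 n) (a10 n) (a11 n) o0 o0) = a00
      by apply: functional_extensionality => n; exact: mx2E00.
    exact: e00.
  + have -> : (fun n => mx2 (a00 n) (a01 n) (a10 n) (a11 n) o0 o1) = a01
      by apply: functional_extensionality => n; exact: mx2E01.
    exact: e01.
  + have -> : (fun n => mx2 (a00 n) (a01 n) (a10 n) (a11 n) o1 o0) = a10
      by apply: functional_extensionality => n; exact: mx2E10.
    exact: e10.
  + have -> : (fun n => mx2 (a00 n) (a01 n) (a10 n) (a11 n) o1 o1) = a11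
      by apply: functional_extensionality => n; exact: mx2E11.
    exact: e11.
- apply: mxeq4; rewrite oneE ?(mx2E00, mx2E01, mx2E10, mx2E11).
  + exact: i00. + exact: i01. + exact: i10. + exact: i11.
- move=> n hn; apply: mxeq4; rewrite zeroE ?(mx2E00, mx2E01, mx2E10, mx2E11).
  + exact: z00. + exact: z01. + exact: z10. + exact: z11.
- move=> n hn; apply: ord2P; apply: ord2P; rewrite ?(mx2E00, mx2E01, mx2E10, mx2E11).
  + exact: s00. + exact: s01. + exact: s10. + exact: s11.
Qed.
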